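(* Let $G$ be a group with identity $e$, $A$ a finite set with $|A|\ge2$, $S\subseteq G$ finite with $e\in S$ and $|S|\ge2$. Suppose $(\mathcal P,f)$ generates a local map $\mu:A^S\to A$. If $e$ is not essential for $\mu$, then $|\mathcal P|=|A|^{|S|}-|A|^{|S|-1}$.
   Context: $A^S$ is the set of functions $S\to A$. For $s\in S$, $\mathrm{Res}_s(z)=z|_{S\setminus\{s\}}$. An element $s\in S$ is essential for $\mu$ if there exist $z,w\in A^S$ with $\mathrm{Res}_s(z)=\mathrm{Res}_s(w)$ but $\mu(z)\neq\mu(w)$. The pair $(\mathcal P,f)$ generates $\mu$ if $\mathcal P=\{z\in A^S:\mu(z)\neq z(e)\}$ and $f:\mathcal P\to A$ is the restriction of $\mu$ to $\mathcal P$. *)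

(* Defs.v *)
From mathcomp Require Import all_boot.
From mathcomp Require Export finmap.
Set Implicit Arguments. Unset Strict Implicit. Unset Printing Implicit Defensive.
Local Open Scope fset_scope.

(* Configurations A^S are finite functions {ffun S -> A}, where S : {fset G}
   is coerced to the finite subtype of its elements. *)

Definition Res (G : choiceType) (S : {fset G}) (A : finType) (s : G)
  (z : {ffun S -> A}) : {ffun (S `\ s) -> A} :=
  [ffun t => z (fincl (fsubD1set S s) t)].

Definition essential (G : choiceType) (S : {fset G}) (A : finType)
  (mu : {ffun S -> A} -> A) (s : G) : Prop :=
  exists z w : {ffun S -> A}, Res s z = Res s w /\ mu z <> mu w.

Definition generates (G : choiceType) (S : {fset G}) (A : finType)
  (e : G) (he : e \in S) (P : {set {ffun S -> A}})
  (f : {z : {ffun S -> A} | z \in P} -> A) (mu : {ffun S -> A} -> A) : Prop :=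
  P = [set z | mu z != z [` he]] /\ (forall zP, f zP = mu (proj1_sig zP)).

(* Main.v *)
Require Import Defs.
From mathcomp Require Import all_boot finmap.

Local Open Scope fset_scope.

Theorem mainTheorem8
  (G : choiceType) (mul : G -> G -> G) (inv : G -> G) (e : G)
  (mulA : forall x y z, mul x (mul y z) = mul (mul x y) z)
  (mul1g : forall x, mul e x = x) (mulg1 : forall x, mul x e = x)
  (mulVg : forall x, mul (inv x) x = e) (mulgV : forall x, mul x (inv x) = e)
  (A : finType) (hA : 2 <= #|A|)
  (S : {fset G}) (he : e \in S) (hS : 2 <= #|` S|)
  (mu : {ffun S -> A} -> A)
  (P : {set {ffun S -> A}}) (f : {z : {ffun S -> A} | z \in P} -> A)
  (hgen : generates he f mu)
  (hess : ~ essential mu e) :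
  #|P| = #|A| ^ #|` S| - #|A| ^ (#|` S| - 1).
Proof.
case: hgen => hP _.
have inv_mu : forall z w, Res e z = Res e w -> mu z = mu w.
  move=> z w hzw; case: (eqVneq (mu z) (mu w)) => // /eqP hne.
  by exfalso; apply: hess; exists z, w.
have [a0 _] : exists a0 : A, a0 \in A by apply/card_gt0P; apply: ltnW.
pose ext (r : {ffun (S `\ e) -> A}) (a : A) : {ffun S -> A} :=
  [ffun x : S => if @insub _ (fun y => y \in S `\ e) (S `\ e) (val x) is Some y then r y else a].
have Res_ext : forall r a, Res e (ext r a) = r.
  move=> r a; apply/ffunP => t; rewrite /Res !ffunE /=.
  by rewrite (_ : insub _ = Some t) // (insubT _ (valP t)) /=; congr Some; apply: val_inj.
have ext_e : forall r a, ext r a [` he] = a.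
  move=> r a; rewrite ffunE /=; case: insubP => // y; rewrite !inE eqxx //.
pose g r := ext r (mu (ext r a0)).
have g_inj : injective g by move=> r1 r2 /(congr1 (Res e)); rewrite !Res_ext.
have hC : ~: P = g @: [set: {ffun (S `\ e) -> A}].
  apply/setP => z; rewrite hP !inE negbK; apply/idP/imsetP.
  - move/eqP => hz; exists (Res e z); first by rewrite inE.
    apply/ffunP => x; rewrite /g ffunE.
    case: insubP => [y _ hy|].
      by rewrite /Res ffunE; congr (z _); apply: val_inj; rewrite /= hy.
    rewrite !inE negb_and negbK => /orP[/eqP hx|]; last by rewrite (fsvalP x).
    idtac.
    have -> : x = [` he] by apply: val_inj.
    by rewrite -hz; apply: inv_mu; rewrite Res_ext.
  - case=> r _ ->; rewrite /g ext_e; apply/eqP; apply: inv_mu; by rewrite !Res_ext.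
have := cardsC P; rewrite hC card_imset // cardsT !card_ffun.
rewrite -!cardfE => <-.
have -> : (#|` S| - 1 = #|` S `\ e|)%N by rewrite (cardfsD1 e S) he add1n subSS subn0.
by rewrite addnK.
Qed.
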